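(* Let $m\ge 0$ be an integer and let $n,N$ be complex numbers such that $N\notin\{0,-1,\dots,-m\}$ and neither $n-m$ nor $1-N-m+n$ belongs to $\{0,-1,\dots,-(m-1)\}$. Then $$(-1)^m\frac{(m+1)\,(n-m)_m\,(N-n)_m}{m!\,(N)_{m+1}}\;{}_3F_2\!\left(\begin{matrix}-m,\ n+1,\ 1-N+n\\ n-m,\ 1-N-m+n\end{matrix};1\right)=\frac{(m+1)^2}{N}\;{}_3F_2\!\left(\begin{matrix}-m,\ n+1,\ m+2\\ 2,\ N+1\end{matrix};1\right).$$
   Context: $(a)_k=a(a+1)\cdots(a+k-1)$ is the Pochhammer symbol, $(a)_0=1$. ${}_3F_2\!\left(\begin{matrix}-m,a_2,a_3\\ b_1,b_2\end{matrix};1\right)=\sum_{k=0}^{m}\frac{(-m)_k(a_2)_k(a_3)_k}{(b_1)_k(b_2)_k\,k!}$ (terminating sum). *)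

(* Defs.v *)
From HB Require Import structures.
From mathcomp Require Import all_boot all_order all_algebra.
From mathcomp Require Import complex.
From mathcomp Require Import reals.
Set Implicit Arguments. Unset Strict Implicit. Unset Printing Implicit Defensive.
Import Order.TTheory GRing.Theory Num.Theory.
Local Open Scope ring_scope.

Definition poch {F : comNzRingType} (a : F) (k : nat) : F :=
  \prod_(i < k) (a + i%:R).

(* Terminating 3F2 with top parameter -m, evaluated at 1. *)
Definition hyp3F2m {F : fieldType} (m : nat) (a2 a3 b1 b2 : F) : F :=
  \sum_(k < m.+1)
    (poch (- (m%:R)) k * poch a2 k * poch a3 k) /
    (poch b1 k * poch b2 k * (k`!)%:R).

(* Main.v *)
Require Import Defs.
From HB Require Import structures.
From mathcomp Require Import all_boot all_order all_algebra.
From mathcomp Require Import complex.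
From mathcomp Require Import reals.
From mathcomp Require Import ring zify.
Import Order.TTheory GRing.Theory Num.Theory.

Lemma binCC m k i : (k + i <= m)%N ->
  'C(m, k) * 'C(m - k, i) = 'C(m, k + i) * 'C(k + i, k).
Proof.
move=> h.
have hk : (k <= m)%N by apply: leq_trans h; apply: leq_addr.
have hi : (i <= m - k)%N by rewrite leq_subRL.
have e1 := bin_fact hk.
have e2 := bin_fact hi.
have e3 := bin_fact h.
have e4 := bin_fact (leq_addr i k).
rewrite addKn in e4. rewrite -subnDA in e2.
set X := (m - (k + i))`! in e2 e3 *.
apply/eqP; rewrite -(eqn_pmul2r (_ : 0 < k`! * i`! * X)) ?muln_gt0 ?fact_gt0 //.
apply/eqP.
have -> : 'C(m, k) * 'C(m - k, i) * (k`! * i`! * X) = 'C(m, k) * (k`! * ('C(m - k, i) * (i`! * X))).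
  by rewrite !mulnA; congr (_ * _); rewrite -!mulnA; congr (_ * _); rewrite mulnCA.
rewrite e2 e1.
have -> : 'C(m, k + i) * 'C(k + i, k) * (k`! * i`! * X) = 'C(m, k + i) * (('C(k + i, k) * (k`! * i`!)) * X).
  by rewrite !mulnA.
by rewrite e4 e3.
Qed.


Local Open Scope ring_scope.

Section Gen.
Context {F : fieldType}.
Implicit Types (a b x y : F).

Definition ff (x : F) (k : nat) : F := \prod_(i < k) (x - i%:R).

Lemma pochS a k : poch a k.+1 = poch a k * (a + k%:R).
Proof. by rewrite /poch big_ord_recr. Qed.

Lemma ffS x k : ff x k.+1 = ff x k * (x - k%:R).
Proof. by rewrite /ff big_ord_recr. Qed.

Lemma poch0 a : poch a 0 = 1.
Proof. by rewrite /poch big_ord0. Qed.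
Lemma ff0 x : ff x 0 = 1.
Proof. by rewrite /ff big_ord0. Qed.

Lemma poch_add a k l : poch a (k + l)%N = poch a k * poch (a + k%:R) l.
Proof.
elim: l => [|l IH]; first by rewrite addn0 poch0 mulr1.
by rewrite addnS !pochS IH natrD -mulrA addrA.
Qed.

Lemma poch_ff a k : poch a k = (-1) ^+ k * ff (- a) k.
Proof.
elim: k => [|k IH]; first by rewrite poch0 ff0 mulr1.
rewrite pochS ffS IH exprS; ring.
Qed.

Lemma poch_refl x l : poch (1 - x - l%:R) l = (-1) ^+ l * poch x l.
Proof.
have -> : (-1) ^+ l * poch x l = \prod_(i < l) - (x + i%:R).
  by rewrite prodrN card_ord.
rewrite /poch (reindex_inj rev_ord_inj) /=; apply: eq_bigr => i _.
by rewrite natrB // -addn1 natrD; ring.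
Qed.

Lemma poch_rev d k : poch d k = ff (d + k%:R - 1) k.
Proof.
rewrite /poch /ff (reindex_inj rev_ord_inj) /=; apply: eq_bigr => i _.
by rewrite natrB // -addn1 natrD; ring.
Qed.

Lemma ff_vdm x y n :
  ff (x + y) n = \sum_(k < n.+1) 'C(n, k)%:R * ff x k * ff y (n - k).
Proof.
elim: n => [|n IH]; first by rewrite big_ord1 !ff0 bin0 !mulr1.
set G := fun i : nat => 'C(n, i)%:R * ff x i * ff y (n.+1 - i).
have HB : ff y n.+1 + \sum_(i < n.+1) 'C(n, i.+1)%:R * ff x i.+1 * ff y (n.+1 - i.+1)
          = \sum_(i < n.+1) G i.
  transitivity (\sum_(i < n.+2) G i).
    by rewrite [in RHS]big_ord_recl /G bin0 ff0 subn0 !mul1r.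
  by rewrite big_ord_recr /= /G bin_small // mul0r mul0r addr0.
rewrite ffS IH big_distrl /=.
rewrite [in RHS]big_ord_recl /= bin0 ff0 subn0 !mul1r.
rewrite [in RHS](eq_bigr (fun i : 'I_n.+1 => 'C(n, i.+1)%:R * ff x i.+1 * ff y (n.+1 - i.+1)
   + 'C(n, i)%:R * ff x i.+1 * ff y (n.+1 - i.+1))); last first.
  by move=> i _; rewrite /bump /= add1n binS natrD !mulrDl.
rewrite big_split /= addrA HB -big_split /=; apply: eq_bigr => i _.
have hi : (i <= n)%N by rewrite -ltnS.
rewrite /G subSS subSn // !ffS natrB //; ring.
Qed.

Lemma sum_ext_bin (G : nat -> F) {n M : nat} : (n < M)%N ->
  \sum_(k < n.+1) 'C(n, k)%:R * G k = \sum_(k < M) 'C(n, k)%:R * G k.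
Proof.
move=> h; rewrite (big_ord_widen M (fun k => 'C(n, k)%:R * G k)) // big_mkcond.
apply: eq_bigr => k _; case: ifP => // /negbT; rewrite -leqNgt => hk.
by rewrite bin_small // mul0r.
Qed.

Lemma ff_vdmM x y n M : (n < M)%N ->
  ff (x + y) n = \sum_(k < M) 'C(n, k)%:R * ff x k * ff y (n - k).
Proof.
move=> h; rewrite ff_vdm.
under eq_bigr => k _ do rewrite -mulrA.
rewrite (sum_ext_bin (fun k => ff x k * ff y (n - k)) h).
by under eq_bigr => k _ do rewrite mulrA.
Qed.

Lemma poch_vdm x y n M : (n < M)%N ->
  poch (x + y) n = \sum_(k < M) 'C(n, k)%:R * poch x k * poch y (n - k).
Proof.
move=> h; rewrite poch_ff opprD (ff_vdmM _ _ _ _ h) mulr_sumr; apply: eq_bigr => k _.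
case: (leqP k n) => hk; last by rewrite bin_small // !mul0r mulr0.
rewrite !poch_ff -{1}(subnKC hk) exprD; ring.
Qed.

Lemma vdm2 a d j M : (j < M)%N ->
  \sum_(k < M) (-1) ^+ k * 'C(j, k)%:R * poch a k * poch (d + k%:R) (j - k)
  = poch (d - a) j.
Proof.
move=> h; rewrite poch_rev.
have -> : d - a + j%:R - 1 = - a + (d + j%:R - 1) by ring.
rewrite (ff_vdmM _ _ _ _ h); apply: eq_bigr => k _.
case: (leqP k j) => hk; last by rewrite bin_small // !mulr0 !mul0r.
rewrite poch_ff poch_rev natrB //.
have -> : d + k%:R + (j%:R - k%:R) - 1 = d + j%:R - 1 by ring.
have e : (-1) ^+ k * (-1) ^+ k = 1 :> F by rewrite -exprMn mulrNN mulr1 expr1n.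
transitivity (((-1) ^+ k * (-1) ^+ k) * 'C(j, k)%:R * ff (- a) k * ff (d + j%:R - 1) (j - k)).
  ring.
by rewrite e mul1r.
Qed.

Lemma expand_pe b e m k : (k <= m)%N ->
  'C(m, k)%:R * poch b k * poch (e + k%:R) (m - k) =
  \sum_(j < m.+1) 'C(m, j)%:R * 'C(j, k)%:R * poch b j * poch (e - b) (m - j).
Proof.
move=> hk.
have -> : e + k%:R = (b + k%:R) + (e - b) by ring.
rewrite (poch_vdm _ _ (m - k) (m - k).+1 (ltnSn _)) mulr_sumr.
set H := fun j : nat => 'C(m, j)%:R * 'C(j, k)%:R * poch b j * poch (e - b) (m - j).
transitivity (\sum_(i < (m - k).+1) H (i + k)%N).
  apply: eq_bigr => i _.
  have hi : (k + i <= m)%N by rewrite -leq_subRL // -ltnS.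
  have E : 'C(m, k)%:R * 'C(m - k, i)%:R = 'C(m, k + i)%:R * 'C(k + i, k)%:R :> F.
    by rewrite -!natrM (binCC _ _ _ hi).
  rewrite /H [(nat_of_ord i + k)%N]addnC (poch_add b k i) -subnDA.
  transitivity (('C(m, k)%:R * 'C(m - k, i)%:R) * (poch b k * poch (b + k%:R) i)
    * poch (e - b) (m - (k + i))); first ring.
  rewrite E; ring.
rewrite -(big_mkord xpredT (fun i => H (i + k)%N)) -(big_mkord xpredT H).
rewrite -subSn // -(big_addn 0 m.+1 k xpredT H) add0n [in RHS](@big_cat_nat _ _ _ k) //=; last exact: leqW.
rewrite [X in _ = X + _]big_nat [X in _ = X + _]big1 ?add0r // => j /andP[_ hj].
by rewrite /H (bin_small hj) mulr0 !mul0r.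
Qed.

Definition PP (m : nat) (a b d e : F) : F :=
  \sum_(k < m.+1) (-1) ^+ k * 'C(m, k)%:R * poch a k * poch b k
     * poch (d + k%:R) (m - k) * poch (e + k%:R) (m - k).

Lemma PP_core m a b d e : PP m a b d e =
  \sum_(j < m.+1) 'C(m, j)%:R * poch (d - a) j * poch (d + j%:R) (m - j)
     * poch b j * poch (e - b) (m - j).
Proof.
rewrite /PP.
transitivity (\sum_(k < m.+1) (-1) ^+ k * poch a k * poch (d + k%:R) (m - k)
   * ('C(m, k)%:R * poch b k * poch (e + k%:R) (m - k))).
  by apply: eq_bigr => k _; ring.
under eq_bigr => k _ do rewrite (@expand_pe b e m k (ltn_ord k)) mulr_sumr.
rewrite exchange_big /=; apply: eq_bigr => j _.
have hj : (j <= m)%N by rewrite -ltnS.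
rewrite -(vdm2 a d j m.+1 (ltn_ord j)) mulr_sumr !mulr_suml; apply: eq_bigr => k _.
case: (leqP k j) => hk; last by rewrite (bin_small hk) !(mulr0, mul0r).
have -> : (m - k = (j - k) + (m - j))%N by rewrite addnBAC // subnKC.
rewrite poch_add (natrB _ hk).
have -> : d + k%:R + (j%:R - k%:R) = d + j%:R by ring.
ring.
Qed.

Lemma sqrN1 k : (-1) ^+ k * (-1) ^+ k = 1 :> F.
Proof. by rewrite -exprMn mulrNN mulr1 expr1n. Qed.

Lemma PP_trans m a b d e :
  PP m a b d e = (-1) ^+ m * PP m (d - a) b d (1 + b - e - m%:R).
Proof.
rewrite PP_core /PP mulr_sumr; apply: eq_bigr => j _.
have hj : (j <= m)%N by rewrite -ltnS.
have -> : 1 + b - e - m%:R + j%:R = 1 - (e - b) - (m - j)%:R by rewrite natrB //; ring.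
rewrite poch_refl.
have -> : (-1) ^+ m = (-1) ^+ j * (-1) ^+ (m - j) :> F by rewrite -exprD subnKC.
transitivity (((-1) ^+ j * (-1) ^+ j) * ((-1) ^+ (m - j) * (-1) ^+ (m - j)) * 'C(m, j)%:R * poch (d - a) j * poch (d + j%:R) (m - j) *
 poch b j * poch (e - b) (m - j)); first by rewrite !sqrN1 !mul1r.
ring.
Qed.

Lemma PP_swap m a b d e : PP m a b d e = PP m b a e d.
Proof. by apply: eq_bigr => k _; ring. Qed.

Lemma PP_swapde m a b d e : PP m a b d e = PP m a b e d.
Proof. by apply: eq_bigr => k _; ring. Qed.

Lemma ff_nat m k : ff (m%:R) k = (m ^_ k)%:R.
Proof.
elim: k => [|k IH]; first by rewrite ff0 ffactn0.
rewrite ffS ffactnSr IH natrM.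
case: (leqP k m) => hk; first by rewrite natrB.
by rewrite ffact_small // !mul0r.
Qed.

End Gen.

Section Num.
Context {F : numFieldType}.

Lemma poch_split (d : F) m k : (k <= m)%N ->
  poch d m = poch d k * poch (d + k%:R) (m - k).
Proof. by move=> hk; rewrite -poch_add subnKC. Qed.

Lemma hyp_PP m (a b d e : F) : poch d m != 0 -> poch e m != 0 ->
  hyp3F2m m a b d e = PP m a b d e / (poch d m * poch e m).
Proof.
move=> hd he; rewrite /hyp3F2m /PP mulr_suml; apply: eq_bigr => k _.
have hk : (k <= m)%N by rewrite -ltnS.
move: hd he; rewrite (poch_split d _ _ hk) (poch_split e _ _ hk) !mulf_eq0 !negb_or.
move=> /andP[hd1 hd2] /andP[he1 he2].
have hf : (k`!)%:R != 0 :> F by rewrite pnatr_eq0 -lt0n fact_gt0.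
rewrite poch_ff opprK ff_nat -bin_ffact natrM.
field.
by rewrite hd1 hd2 he1 he2 hf.
Qed.

End Num.

Section Extra.
Context {F : numFieldType}.

Lemma poch_neq0 (a : F) k : (forall i, (i < k)%N -> a + i%:R != 0) -> poch a k != 0.
Proof. by move=> h; rewrite /poch; apply/prodf_neq0 => i _; apply: h. Qed.

Lemma poch2 k : poch (2 : F) k = (k.+1)`!%:R.
Proof.
elim: k => [|k IH]; first by rewrite poch0.
rewrite pochS IH [(k.+2)`!]factS natrM mulrC; congr (_ * _).
by rewrite !mulrS; ring.
Qed.

Lemma pochS1 (N : F) m : poch N m.+1 = N * poch (N + 1) m.
Proof.
by rewrite -add1n poch_add /poch big_ord1 addr0.
Qed.

End Extra.

Local Open Scope complex_scope.

Theorem mainTheorem2 (R : realType) (m : nat) (n N : R[i])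
  (hN : forall j : nat, (j <= m)%N -> N != - (j%:R))
  (hn : forall j : nat, (j < m)%N -> n - m%:R != - (j%:R))
  (hNn : forall j : nat, (j < m)%N -> 1 - N - m%:R + n != - (j%:R)) :
  (-1) ^+ m * ((m.+1)%:R * poch (n - m%:R) m * poch (N - n) m)
     / ((m`!)%:R * poch N m.+1)
   * hyp3F2m m (n + 1) (1 - N + n) (n - m%:R) (1 - N - m%:R + n)
  = (m.+1)%:R ^+ 2 / N * hyp3F2m m (n + 1) (m.+2)%:R 2 (N + 1).
Proof.
have h1 : poch (n - m%:R) m != 0.
  by apply: poch_neq0 => i hi; rewrite addr_eq0; apply: hn.
have h2 : poch (1 - N - m%:R + n) m != 0.
  by apply: poch_neq0 => i hi; rewrite addr_eq0; apply: hNn.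
have h3 : poch (N + 1) m != 0.
  apply: poch_neq0 => i hi.
  have -> : N + 1 + i%:R = N + (i.+1)%:R by rewrite -addn1 natrD; ring.
  by rewrite addr_eq0; apply: hN.
have h4 : N != 0 by have := hN 0%N (leq0n m); rewrite oppr0.
have h5 : poch (2 : R[i]) m != 0 by rewrite poch2 pnatr_eq0 -lt0n fact_gt0.
have h6 : (m`!)%:R != 0 :> R[i] by rewrite pnatr_eq0 -lt0n fact_gt0.
have h7 : (m.+1)%:R != 0 :> R[i] by rewrite pnatr_eq0.
have P12 : PP m (n + 1) (1 - N + n) (n - m%:R) (1 - N - m%:R + n)
         = PP m (n + 1) (m.+2)%:R 2 (N + 1).
  rewrite PP_swap PP_swapde PP_trans.
  have -> : n - m%:R - (1 - N + n) = N - m%:R - 1 by ring.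
  have -> : 1 + (n + 1) - (1 - N - m%:R + n) - m%:R = N + 1 by ring.
  rewrite PP_swapde PP_trans.
  have -> : N + 1 - (N - m%:R - 1) = (m.+2)%:R by rewrite -addn2 natrD; ring.
  have -> : 1 + (n + 1) - (n - m%:R) - m%:R = 2 by ring.
  by rewrite PP_swap mulrA sqrN1 mul1r.
rewrite (hyp_PP _ _ _ _ _ h1 h2) (hyp_PP _ _ _ _ _ h5 h3) P12.
have -> : poch (N - n) m = (-1) ^+ m * poch (1 - N - m%:R + n) m.
  have -> : 1 - N - m%:R + n = 1 - (N - n) - m%:R by ring.
  by rewrite poch_refl mulrA sqrN1 mul1r.
rewrite pochS1 poch2 factS natrM.
have E : forall s a b c : R[i], s * (a * b * (s * c)) = (s * s) * (a * b * c)
  by move=> s a b c; ring.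
rewrite E sqrN1 mul1r.
field.
rewrite ?h1 ?h2 ?h3 ?h4 ?h6 ?h7 /=.
by rewrite addrC natr1 pnatr_eq0.
Qed.
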